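(* Under the setting in the context, let $z^\star\in H$ satisfy $a(z^\star,v)=b(v)$ for all $v\in H$ and $\operatorname{dist}(z^\star,V_k)\le\hat\epsilon_k$ for all $k=0,\dots,n$, and let $z_{\mathrm{MS}}$ be any solution of (MS). Then $f(P_{V_n}z^\star)\le\gamma^2\epsilon_n^2$ and $f(z_{\mathrm{MS}})\le\gamma^2\epsilon_n^2$. Moreover, writing $P_{V_n}z^\star-z_{\mathrm{MS}}=\sum_{j=1}^n\beta_jv_j^*$ with $\beta_j=\langle v_j^*,P_{V_n}z^\star-z_{\mathrm{MS}}\rangle$, one has $\sum_{j=1}^n\sigma_j^2\beta_j^2\le4\gamma^2\epsilon_n^2$.
   Context: $H$ is a real Hilbert space, $a:H\times H\to\mathbb R$ bilinear, $b:H\to\mathbb R$ linear. $V_0\subset\dots\subset V_n\subset H$ are subspaces with $\dim V_k=k$ and orthonormal basis $\{v_1,\dots,v_n\}$ of $V_n$ with $V_k=\operatorname{span}\{v_1,\dots,v_k\}$; $P_{V_n}$ is the orthogonal projector onto $V_n$. $Z_m$ is a subspace of dimension $m\ge n$ with orthonormal basis $\{z_1,\dots,z_m\}$. Each $a(\cdot,z_j)$ is continuous with Riesz representer $r_j$, i.e. $a(v,z_j)=\langle r_j,v\rangle$ for all $v$. $G\in\mathbb R^{m\times n}$, $G_{ij}=\langle r_i,v_j\rangle$, has SVD $G=U\Lambda X^T$ with $U,X=(x_{ij})$ orthogonal and singular values $\sigma_1\ge\dots\ge\sigma_n\ge0$ on the diagonal of $\Lambda$. Set $v_j^*=\sum_{i=1}^n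 x_{ij}v_i$ ($j=1,\dots,n$). Given positive $\hat\epsilon_0,\dots,\hat\epsilon_n$, problem (MS) is: minimize $f(v)=\sum_{j=1}^m(b(z_j)-a(v,z_j))^2$ over $v\in V_n$ subject to $\operatorname{dist}(v,V_k)\le\hat\epsilon_k$, $k=0,\dots,n$. $\epsilon_n=\operatorname{dist}(z^\star,V_n)$ and $\gamma=\sup\{(\sum_{j=1}^m\langle r_j,v\rangle^2)^{1/2}: v\in V_n^\perp,\|v\|=1\}$. *)

(* Defs.v *)
From Stdlib Require Import Reals Lra Lia Classical ClassicalEpsilon.
Open Scope R_scope.

Record Hilbert := {
  hcar :> Type;
  hzero : hcar;
  hadd : hcar -> hcar -> hcar;
  hscal : R -> hcar -> hcar;
  hinner : hcar -> hcar -> R;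
  hadd_assoc : forall x y z, hadd x (hadd y z) = hadd (hadd x y) z;
  hadd_comm : forall x y, hadd x y = hadd y x;
  hadd_0 : forall x, hadd x hzero = x;
  hadd_opp : forall x, hadd x (hscal (-1) x) = hzero;
  hscal_1 : forall x, hscal 1 x = x;
  hscal_assoc : forall a b x, hscal a (hscal b x) = hscal (a * b) x;
  hscal_distr_l : forall a x y, hscal a (hadd x y) = hadd (hscal a x) (hscal a y);
  hscal_distr_r : forall a b x, hscal (a + b) x = hadd (hscal a x) (hscal b x);
  hinner_sym : forall x y, hinner x y = hinner y x;
  hinner_add : forall x y z, hinner (hadd x y) z = hinner x z + hinner y z;
  hinner_scal : forall a x y, hinner (hscal a x) y = a * hinner x y;
  hinner_pos : forall x, 0 <= hinner x x;
  hinner_def : forall x, hinner x x = 0 -> x = hzero;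
  hcomplete : forall u : nat -> hcar,
    (forall eps, eps > 0 -> exists N, forall p q, (p >= N)%nat -> (q >= N)%nat ->
        sqrt (hinner (hadd (u p) (hscal (-1) (u q))) (hadd (u p) (hscal (-1) (u q)))) < eps) ->
    exists l, forall eps, eps > 0 -> exists N, forall p, (p >= N)%nat ->
        sqrt (hinner (hadd (u p) (hscal (-1) l)) (hadd (u p) (hscal (-1) l))) < eps
}.

Arguments hzero {h}.
Arguments hadd {h}.
Arguments hscal {h}.
Arguments hinner {h}.

Definition hsub {H : Hilbert} (x y : H) : H := hadd x (hscal (-1) y).
Definition hnorm {H : Hilbert} (x : H) : R := sqrt (hinner x x).

Fixpoint sum1 (n : nat) (f : nat -> R) : R :=
  match n with O => 0 | S k => sum1 k f + f (S k) end.

Fixpoint vsum1 {H : Hilbert} (n : nat) (f : nat -> H) : H :=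
  match n with O => hzero | S k => hadd (vsum1 k f) (f (S k)) end.

Definition span1 {H : Hilbert} (v : nat -> H) (k : nat) (x : H) : Prop :=
  exists c : nat -> R, x = vsum1 k (fun i => hscal (c i) (v i)).

(* supremum / infimum of a set of reals (chosen classically;
   the value is only meaningful when the sup/inf exists) *)
Definition Rsup (E : R -> Prop) : R := epsilon (inhabits 0) (fun s => is_lub E s).
Definition Rinf (E : R -> Prop) : R := - Rsup (fun y => E (- y)).

Definition hdist {H : Hilbert} (x : H) (S : H -> Prop) : R :=
  Rinf (fun d => exists y, S y /\ d = hnorm (hsub x y)).

Definition orth_proj {H : Hilbert} (S : H -> Prop) (x : H) : H :=
  epsilon (inhabits hzero) (fun p => S p /\ forall y, S y -> hinner (hsub x p) y = 0).

(* Main.v *)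
Require Import Defs.
From Stdlib Require Import Reals Lra Lia ClassicalEpsilon.
Open Scope R_scope.

Section S.
Context {H : Hilbert}.

Lemma inner_addr (x y w : H) : hinner x (hadd y w) = hinner x y + hinner x w.
Proof. rewrite hinner_sym, hinner_add, (hinner_sym _ _ y), (hinner_sym _ _ w). ring. Qed.
Lemma inner_scalr a (x y : H) : hinner x (hscal a y) = a * hinner x y.
Proof. rewrite hinner_sym, hinner_scal, hinner_sym. ring. Qed.
Lemma inner_subl (x y w : H) : hinner (hsub x y) w = hinner x w - hinner y w.
Proof. unfold hsub. rewrite hinner_add, hinner_scal. ring. Qed.
Lemma inner_subr (x y w : H) : hinner w (hsub x y) = hinner w x - hinner w y.
Proof. rewrite hinner_sym, inner_subl, !(hinner_sym _ w). ring. Qed.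
Lemma inner_0l (y : H) : hinner hzero y = 0.
Proof.
  assert (E : hinner (hadd hzero hzero) y = hinner (@hzero H) y + hinner hzero y) by apply hinner_add.
  rewrite hadd_0 in E. lra. Qed.
Lemma inner_0r (y : H) : hinner y hzero = 0.
Proof. rewrite hinner_sym. apply inner_0l. Qed.
Lemma inner_sub_sub (x y : H) : hinner (hsub x y) (hsub x y) = hinner x x - 2 * hinner x y + hinner y y.
Proof. rewrite inner_subl, !inner_subr, (hinner_sym _ y x). ring. Qed.
Lemma inner_add_add (x y : H) : hinner (hadd x y) (hadd x y) = hinner x x + 2 * hinner x y + hinner y y.
Proof. rewrite hinner_add, !inner_addr, (hinner_sym _ y x). ring. Qed.

Lemma hext (x y : H) : (forall w, hinner x w = hinner y w) -> x = y.
Proof.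
  intros Hw.
  assert (E : hinner (hsub x y) (hsub x y) = 0) by (rewrite inner_subl, Hw; ring).
  apply hinner_def in E. unfold hsub in E.
  rewrite <- (hadd_0 _ x).
  rewrite <- (hadd_opp _ y), (hadd_comm _ y (hscal (-1) y)), hadd_assoc, E, hadd_comm, hadd_0.
  reflexivity.
Qed.

Lemma inner_vsum k (f : nat -> H) y : hinner (vsum1 k f) y = sum1 k (fun i => hinner (f i) y).
Proof. induction k; simpl. apply inner_0l. rewrite hinner_add, IHk. reflexivity. Qed.

Lemma vsum1_ext k (f g : nat -> H) : (forall i, (1 <= i <= k)%nat -> f i = g i) -> vsum1 k f = vsum1 k g.
Proof. induction k; intros E; simpl. reflexivity. rewrite IHk, E. reflexivity. lia. intros; apply E; lia. Qed.
End S.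

Lemma sum1_ext k f g : (forall i, (1 <= i <= k)%nat -> f i = g i) -> sum1 k f = sum1 k g.
Proof. induction k; intros E; simpl. reflexivity. rewrite IHk, E. reflexivity. lia. intros; apply E; lia. Qed.
Lemma sum1_plus k f g : sum1 k (fun i => f i + g i) = sum1 k f + sum1 k g.
Proof. induction k; simpl. ring. rewrite IHk. ring. Qed.
Lemma sum1_minus k f g : sum1 k (fun i => f i - g i) = sum1 k f - sum1 k g.
Proof. induction k; simpl. ring. rewrite IHk. ring. Qed.
Lemma sum1_scal k c f : sum1 k (fun i => c * f i) = c * sum1 k f.
Proof. induction k; simpl. ring. rewrite IHk. ring. Qed.
Lemma sum1_scalr k c f : sum1 k (fun i => f i * c) = sum1 k f * c.
Proof. induction k; simpl. ring. rewrite IHk. ring. Qed.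
Lemma sum1_zero k f : (forall i, (1 <= i <= k)%nat -> f i = 0) -> sum1 k f = 0.
Proof. intros E. rewrite (sum1_ext k f (fun _ => 0)) by auto. clear. induction k; simpl; lra. Qed.
Lemma sum1_le k f g : (forall i, (1 <= i <= k)%nat -> f i <= g i) -> sum1 k f <= sum1 k g.
Proof. induction k; intros E; simpl. lra. apply Rplus_le_compat. apply IHk; intros; apply E; lia. apply E; lia. Qed.
Lemma sum1_nonneg k f : (forall i, (1 <= i <= k)%nat -> 0 <= f i) -> 0 <= sum1 k f.
Proof. intros E. apply Rle_trans with (sum1 k (fun _ => 0)). clear; induction k; simpl; lra. apply sum1_le; auto. Qed.
Lemma sum1_delta k f j : (1 <= j <= k)%nat -> sum1 k (fun i => f i * (if Nat.eqb i j then 1 else 0)) = f j.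
Proof.
  induction k; intros Hj. lia.
  change (sum1 (S k) ?g) with (sum1 k g + g (S k)).
  destruct (Nat.eq_dec j (S k)) as [->|Hne].
  - rewrite Nat.eqb_refl, sum1_zero. ring. intros i Hi.
    replace (Nat.eqb i (S k)) with false. ring. symmetry; apply Nat.eqb_neq; lia.
  - rewrite IHk by lia. replace (Nat.eqb (S k) j) with false. ring. symmetry; apply Nat.eqb_neq; lia.
Qed.
Lemma sum1_swap a b F : sum1 a (fun i => sum1 b (fun j => F i j)) = sum1 b (fun j => sum1 a (fun i => F i j)).
Proof. induction a; simpl. symmetry; apply sum1_zero; auto. rewrite IHa, <- sum1_plus. reflexivity. Qed.
Lemma sum1_sq n f : (sum1 n f) ^ 2 = sum1 n (fun l => sum1 n (fun p => f l * f p)).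
Proof.
  replace ((sum1 n f)^2) with (sum1 n f * sum1 n f) by ring.
  rewrite <- sum1_scalr. apply sum1_ext; intros. rewrite <- sum1_scal. reflexivity.
Qed.

Lemma Rsup_max (E : R -> Prop) M : E M -> (forall y, E y -> y <= M) -> Rsup E = M.
Proof.
  intros HM Hub. unfold Rsup.
  assert (L : is_lub E M) by (split; [exact Hub| intros b Hb; apply Hb; auto]).
  destruct (epsilon_spec (inhabits 0) (fun s => is_lub E s) (ex_intro _ M L)) as [H1 H2].
  apply Rle_antisym; [apply H2; exact Hub | apply H1; exact HM].
Qed.
Lemma Rinf_min (E : R -> Prop) m : E m -> (forall y, E y -> m <= y) -> Rinf E = m.
Proof.
  intros Hm Hlb. unfold Rinf. rewrite (Rsup_max _ (-m)). ring.
  rewrite Ropp_involutive; auto. intros y Hy. apply Hlb in Hy. lra.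
Qed.
Lemma Rsup_lub (E : R -> Prop) : bound E -> (exists x, E x) -> is_lub E (Rsup E).
Proof.
  intros Hb Hne. destruct (completeness E Hb Hne) as [M HM]. unfold Rsup.
  apply (epsilon_spec (inhabits 0) (fun s => is_lub E s) (ex_intro _ M HM)).
Qed.

Definition Pk {H : Hilbert} (v : nat -> H) k (x : H) := vsum1 k (fun i => hscal (hinner x (v i)) (v i)).

Section P.
Context {H : Hilbert} (v : nat -> H) (n : nat)
  (v_orth : forall i j, (1 <= i <= n)%nat -> (1 <= j <= n)%nat ->
             hinner (v i) (v j) = if Nat.eqb i j then 1 else 0).

Lemma inner_Pk k x w : hinner (Pk v k x) w = sum1 k (fun i => hinner x (v i) * hinner (v i) w).
Proof. unfold Pk. rewrite inner_vsum. apply sum1_ext; intros. apply hinner_scal. Qed.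

Lemma coef k c j : (k <= n)%nat -> (1 <= j <= k)%nat ->
  hinner (vsum1 k (fun i => hscal (c i) (v i))) (v j) = c j.
Proof.
  intros Hk Hj. rewrite inner_vsum. rewrite <- (sum1_delta k c j Hj).
  apply sum1_ext; intros. rewrite hinner_scal, v_orth by lia. reflexivity.
Qed.

Lemma orth_span k w y : (k <= n)%nat -> (forall i, (1 <= i <= k)%nat -> hinner w (v i) = 0) ->
  span1 v k y -> hinner w y = 0.
Proof.
  intros Hk Hw [c ->]. rewrite hinner_sym, inner_vsum. apply sum1_zero; intros.
  rewrite hinner_scal, hinner_sym, Hw by lia. ring.
Qed.

Lemma P_perp k x j : (k <= n)%nat -> (1 <= j <= k)%nat -> hinner (hsub x (Pk v k x)) (v j) = 0.
Proof. intros. rewrite inner_subl. unfold Pk. rewrite coef by lia. ring. Qed.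

Lemma Pk_span k x : span1 v k (Pk v k x).
Proof. exists (fun i => hinner x (v i)). reflexivity. Qed.

Lemma span_expand k p : (k <= n)%nat -> span1 v k p ->
  forall w, hinner p w = sum1 k (fun i => hinner p (v i) * hinner (v i) w).
Proof.
  intros Hk Hp w. destruct Hp as [c Hc].
  assert (E : forall i, (1 <= i <= k)%nat -> hinner p (v i) = c i) by (intros; rewrite Hc; apply coef; lia).
  rewrite Hc at 1. rewrite inner_vsum. apply sum1_ext; intros. rewrite E by lia. apply hinner_scal.
Qed.

Lemma dist_Pk k x : (k <= n)%nat -> hdist x (span1 v k) = hnorm (hsub x (Pk v k x)).
Proof.
  intros Hk. unfold hdist. apply Rinf_min.
  - exists (Pk v k x). split; [apply Pk_span | reflexivity].
  - intros d [y [Hy ->]]. unfold hnorm. apply sqrt_le_1_alt.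
    set (p := Pk v k x).
    assert (A1 : hinner (hsub x p) p = 0) by (apply (orth_span k); auto; [intros; apply P_perp; lia | apply Pk_span]).
    assert (A2 : hinner (hsub x p) y = 0) by (apply (orth_span k); auto; intros; apply P_perp; lia).
    rewrite inner_subl in A1, A2.
    pose proof (hinner_pos _ (hsub p y)) as P. rewrite inner_sub_sub in P.
    rewrite !inner_sub_sub. rewrite (hinner_sym _ p y) in *. lra.
Qed.
End P.

Lemma v_in_span {H : Hilbert} (v : nat -> H) n j : (1 <= j <= n)%nat -> span1 v n (v j).
Proof.
  intros Hj. exists (fun i => if Nat.eqb i j then 1 else 0). apply hext; intros w.
  rewrite inner_vsum. rewrite <- (sum1_delta n (fun i => hinner (v i) w) j Hj).
  apply sum1_ext; intros. rewrite hinner_scal. ring.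
Qed.

Lemma X_collapse n (X : nat -> nat -> R) c t
  (X_orth2 : forall i j, (1 <= i <= n)%nat -> (1 <= j <= n)%nat ->
             sum1 n (fun k => X i k * X j k) = if Nat.eqb i j then 1 else 0) :
  sum1 n (fun j => sum1 n (fun k => X k j * c k) * sum1 n (fun i => X i j * t i))
  = sum1 n (fun k => c k * t k).
Proof.
  transitivity (sum1 n (fun j => sum1 n (fun k => sum1 n (fun i => X k j * c k * (X i j * t i))))).
  { apply sum1_ext; intros j Hj. rewrite <- sum1_scalr. apply sum1_ext; intros k Hk.
    rewrite <- sum1_scal. reflexivity. }
  rewrite sum1_swap. apply sum1_ext; intros k Hk.
  rewrite sum1_swap.
  rewrite <- (sum1_delta n (fun i => c k * t i) k Hk).
  apply sum1_ext; intros i Hi.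
  transitivity (c k * t i * sum1 n (fun j => X k j * X i j)).
  { rewrite <- sum1_scal. apply sum1_ext; intros. ring. }
  rewrite X_orth2 by lia. rewrite Nat.eqb_sym. reflexivity.
Qed.

Lemma U_collapse n m (U : nat -> nat -> R) a (Hnm : (n <= m)%nat)
  (U_orth1 : forall i j, (1 <= i <= m)%nat -> (1 <= j <= m)%nat ->
             sum1 m (fun k => U k i * U k j) = if Nat.eqb i j then 1 else 0) :
  sum1 m (fun i => (sum1 n (fun l => U i l * a l)) ^ 2) = sum1 n (fun l => a l ^ 2).
Proof.
  transitivity (sum1 m (fun i => sum1 n (fun l => sum1 n (fun p => U i l * a l * (U i p * a p))))).
  { apply sum1_ext; intros. apply sum1_sq. }
  rewrite sum1_swap. transitivity (sum1 n (fun l => a l * a l)); [| apply sum1_ext; intros; ring].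
  apply sum1_ext; intros l Hl.
  rewrite sum1_swap.
  rewrite <- (sum1_delta n (fun p => a l * a p) l Hl).
  apply sum1_ext; intros p Hp.
  transitivity (a l * a p * sum1 m (fun i => U i l * U i p)).
  { rewrite <- sum1_scal. apply sum1_ext; intros. ring. }
  rewrite U_orth1 by lia. rewrite Nat.eqb_sym. reflexivity.
Qed.
Theorem mainTheorem3
  (H : Hilbert) (a : H -> H -> R) (b : H -> R)
  (a_lin_l : forall x y w, a (hadd x y) w = a x w + a y w)
  (a_scal_l : forall c x w, a (hscal c x) w = c * a x w)
  (a_lin_r : forall w x y, a w (hadd x y) = a w x + a w y)
  (a_scal_r : forall c w x, a w (hscal c x) = c * a w x)
  (b_lin : forall x y, b (hadd x y) = b x + b y)
  (b_scal : forall c x, b (hscal c x) = c * b x)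
  (n m : nat) (Hnm : (n <= m)%nat)
  (v : nat -> H)
  (v_orth : forall i j, (1 <= i <= n)%nat -> (1 <= j <= n)%nat ->
             hinner (v i) (v j) = if Nat.eqb i j then 1 else 0)
  (z : nat -> H)
  (z_orth : forall i j, (1 <= i <= m)%nat -> (1 <= j <= m)%nat ->
             hinner (z i) (z j) = if Nat.eqb i j then 1 else 0)
  (r : nat -> H)
  (r_riesz : forall j, (1 <= j <= m)%nat -> forall w, a w (z j) = hinner (r j) w)
  (G : nat -> nat -> R)
  (G_def : forall i j, (1 <= i <= m)%nat -> (1 <= j <= n)%nat -> G i j = hinner (r i) (v j))
  (U X : nat -> nat -> R) (sigma : nat -> R)
  (U_orth1 : forall i j, (1 <= i <= m)%nat -> (1 <= j <= m)%nat ->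
             sum1 m (fun k => U k i * U k j) = if Nat.eqb i j then 1 else 0)
  (U_orth2 : forall i j, (1 <= i <= m)%nat -> (1 <= j <= m)%nat ->
             sum1 m (fun k => U i k * U j k) = if Nat.eqb i j then 1 else 0)
  (X_orth1 : forall i j, (1 <= i <= n)%nat -> (1 <= j <= n)%nat ->
             sum1 n (fun k => X k i * X k j) = if Nat.eqb i j then 1 else 0)
  (X_orth2 : forall i j, (1 <= i <= n)%nat -> (1 <= j <= n)%nat ->
             sum1 n (fun k => X i k * X j k) = if Nat.eqb i j then 1 else 0)
  (sigma_mono : forall j, (1 <= j < n)%nat -> sigma (S j) <= sigma j)
  (sigma_nonneg : forall j, (1 <= j <= n)%nat -> 0 <= sigma j)
  (G_svd : forall i j, (1 <= i <= m)%nat -> (1 <= j <= n)%nat ->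
             G i j = sum1 n (fun k => U i k * sigma k * X j k))
  (epshat : nat -> R) (epshat_pos : forall k, (k <= n)%nat -> 0 < epshat k)
  (zstar : H)
  (zstar_eq : forall w, a zstar w = b w)
  (zstar_dist : forall k, (k <= n)%nat -> hdist zstar (span1 v k) <= epshat k)
  (zMS : H) :
  let f := fun w : H => sum1 m (fun j => (b (z j) - a w (z j)) ^ 2) in
  let feasible := fun w : H => span1 v n w /\
        forall k, (k <= n)%nat -> hdist w (span1 v k) <= epshat k in
  feasible zMS ->
  (forall w, feasible w -> f zMS <= f w) ->
  let eps_n := hdist zstar (span1 v n) in
  let gamma := Rsup (fun s => exists w : H,
        (forall y, span1 v n y -> hinner w y = 0) /\ hnorm w = 1 /\
        s = sqrt (sum1 m (fun j => (hinner (r j) w) ^ 2))) in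
  let Pz := orth_proj (span1 v n) zstar in
  let vstar := fun j => vsum1 n (fun i => hscal (X i j) (v i)) in
  let beta := fun j => hinner (vstar j) (hsub Pz zMS) in
  f Pz <= gamma ^ 2 * eps_n ^ 2 /\
  f zMS <= gamma ^ 2 * eps_n ^ 2 /\
  hsub Pz zMS = vsum1 n (fun j => hscal (beta j) (vstar j)) /\
  sum1 n (fun j => sigma j ^ 2 * beta j ^ 2) <= 4 * gamma ^ 2 * eps_n ^ 2.
Proof.
  intros f feasible HzMS Hmin eps_n gamma Pz vstar beta.
  assert (Hf : forall w, f w = sum1 m (fun j => (hinner (r j) (hsub zstar w))^2)).
  { intros w. unfold f. apply sum1_ext; intros j Hj.
    rewrite <- zstar_eq, !r_riesz by lia. rewrite inner_subr. reflexivity. }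
  assert (Hspec : span1 v n Pz /\ forall y, span1 v n y -> hinner (hsub zstar Pz) y = 0).
  { unfold Pz, orth_proj. apply epsilon_spec. exists (Pk v n zstar). split. apply Pk_span.
    intros y Hy. apply (orth_span v n n); auto. intros; apply (P_perp v n v_orth); auto; lia. }
  destruct Hspec as [HPzs HPzp].
  assert (HPc : forall i, (1 <= i <= n)%nat -> hinner Pz (v i) = hinner zstar (v i)).
  { intros i Hi. pose proof (HPzp (v i) (v_in_span v n i Hi)) as E. rewrite inner_subl in E. lra. }
  assert (HPz : Pz = Pk v n zstar).
  { apply hext; intros w. rewrite (span_expand v n v_orth n Pz (le_n n) HPzs w).
    rewrite inner_Pk. apply sum1_ext; intros. rewrite HPc by lia. reflexivity. }
  assert (Hfeas : feasible Pz).
  { split; auto. intros k Hk. rewrite (dist_Pk v n v_orth k Pz Hk).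
    eapply Rle_trans; [|apply (zstar_dist k Hk)]. rewrite (dist_Pk v n v_orth k zstar Hk).
    assert (Eq : Pk v k Pz = Pk v k zstar)
      by (unfold Pk; apply vsum1_ext; intros; rewrite HPc by lia; reflexivity).
    rewrite Eq. unfold hnorm. apply sqrt_le_1_alt. set (q := Pk v k zstar).
    assert (A1 : hinner (hsub zstar Pz) Pz = 0) by (apply HPzp; auto).
    assert (A2 : hinner (hsub zstar Pz) q = 0).
    { apply (orth_span v n k); [lia| |apply Pk_span]. intros i Hi. apply HPzp, v_in_span; lia. }
    rewrite inner_subl in A1, A2. pose proof (hinner_pos _ (hsub zstar Pz)) as P.
    rewrite inner_sub_sub in P. rewrite !inner_sub_sub. lra. }
  pose proof (Hmin Pz Hfeas) as Hf2.
  assert (Heps : eps_n = hnorm (hsub zstar Pz)).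
  { unfold eps_n. rewrite (dist_Pk v n v_orth n) by lia. rewrite HPz. reflexivity. }
  set (d := hsub zstar Pz) in *.
  assert (Hg : sum1 m (fun j => (hinner (r j) d)^2) <= gamma^2 * eps_n^2).
  { rewrite Heps. fold d. destruct (Req_dec (hinner d d) 0) as [D0|D0].
    - apply hinner_def in D0. rewrite D0, sum1_zero. apply Rmult_le_pos; apply pow2_ge_0.
      intros; rewrite inner_0r; ring.
    - assert (Dp : 0 < hinner d d) by (pose proof (hinner_pos _ d); lra).
      set (N := hnorm d).
      assert (Np : 0 < N) by (apply sqrt_lt_R0; exact Dp).
      assert (N2 : N^2 = hinner d d) by (apply pow2_sqrt; lra).
      set (w := hscal (/N) d).
      set (T := sum1 m (fun j => hinner (r j) d ^ 2)).
      set (Sw := sum1 m (fun j => hinner (r j) w ^ 2)).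
      assert (HSw : Sw = (/N)^2 * T).
      { unfold Sw, T. rewrite <- sum1_scal. apply sum1_ext; intros. unfold w. rewrite inner_scalr. ring. }
      assert (Sw0 : 0 <= Sw) by (apply sum1_nonneg; intros; apply pow2_ge_0).
      assert (Bd : forall w', hnorm w' = 1 -> sum1 m (fun j => hinner (r j) w' ^2) <=
                   sum1 m (fun j => ((hinner (r j) (r j) + 1)/2)^2)).
      { intros w' Hw'. assert (W1 : hinner w' w' = 1).
        { unfold hnorm in Hw'. rewrite <- (pow2_sqrt (hinner w' w')) by apply hinner_pos. rewrite Hw'; ring. }
        apply sum1_le; intros j Hj. pose proof (hinner_pos _ (hsub (r j) w')) as P1.
        pose proof (hinner_pos _ (hadd (r j) w')) as P2. rewrite inner_sub_sub in P1.
        rewrite inner_add_add in P2. rewrite W1 in P1, P2. nra. }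
      assert (Mem : (forall y, span1 v n y -> hinner w y = 0) /\ hnorm w = 1).
      { split.
        - intros y Hy. unfold w. rewrite hinner_scal, HPzp by auto. ring.
        - unfold hnorm, w. rewrite hinner_scal, inner_scalr, <- N2.
          replace (/ N * (/ N * N ^ 2)) with 1 by (field; lra). apply sqrt_1. }
      assert (Hge : sqrt Sw <= gamma).
      { unfold gamma. match goal with |- _ <= Rsup ?E =>
          assert (L : is_lub E (Rsup E)); [apply Rsup_lub|apply (proj1 L)] end.
        - exists (sqrt (sum1 m (fun j => ((hinner (r j) (r j) + 1)/2)^2))).
          intros s [w' [_ [Hw' ->]]]. apply sqrt_le_1_alt, Bd, Hw'.
        - exists (sqrt Sw), w. tauto.
        - exists w. tauto. }
      assert (G2 : Sw <= gamma ^ 2).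
      { rewrite <- (pow2_sqrt Sw) by exact Sw0. apply pow_incr. split; auto. apply sqrt_pos. }
      assert (TE : T = N^2 * Sw) by (rewrite HSw; field; lra).
      rewrite TE. nra. }
  assert (H1 : f Pz <= gamma ^ 2 * eps_n ^ 2) by (rewrite Hf; exact Hg).
  split; [exact H1|]. split; [lra|].
  destruct HzMS as [HzS _].
  assert (He : forall w, hinner (hsub Pz zMS) w = sum1 n (fun i => hinner (hsub Pz zMS) (v i) * hinner (v i) w)).
  { intros w. rewrite inner_subl, (span_expand v n v_orth n Pz (le_n n) HPzs w),
      (span_expand v n v_orth n zMS (le_n n) HzS w), <- sum1_minus.
    apply sum1_ext; intros. rewrite inner_subl. ring. }
  assert (Hbeta : forall j, beta j = sum1 n (fun i => X i j * hinner (hsub Pz zMS) (v i))).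
  { intros j. unfold beta, vstar. rewrite inner_vsum. apply sum1_ext; intros.
    rewrite hinner_scal, (hinner_sym _ (v i)). reflexivity. }
  split.
  - apply hext; intros w. rewrite He, inner_vsum.
    transitivity (sum1 n (fun j => sum1 n (fun k => X k j * hinner (hsub Pz zMS) (v k)) * sum1 n (fun i => X i j * hinner (v i) w))).
    + symmetry. apply (X_collapse n X (fun k => hinner (hsub Pz zMS) (v k)) (fun i => hinner (v i) w) X_orth2).
    + apply sum1_ext; intros j Hj. rewrite hinner_scal, Hbeta. f_equal. unfold vstar.
      rewrite inner_vsum. apply sum1_ext; intros; symmetry; apply hinner_scal.
  - assert (Hri : forall i, (1<=i<=m)%nat -> hinner (r i) (hsub Pz zMS) = sum1 n (fun l => U i l * (sigma l * beta l))).
    { intros i Hi. rewrite hinner_sym, He.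
      transitivity (sum1 n (fun k => sum1 n (fun l => hinner (hsub Pz zMS) (v k) * (U i l * sigma l * X k l)))).
      { apply sum1_ext; intros k Hk. rewrite (hinner_sym _ (v k) (r i)), <- G_def, G_svd by lia. rewrite <- sum1_scal. reflexivity. }
      rewrite sum1_swap. apply sum1_ext; intros l Hl. rewrite Hbeta. rewrite <- !sum1_scal. apply sum1_ext; intros. ring. }
    assert (Sq : sum1 n (fun j => sigma j ^2 * beta j ^2) = sum1 m (fun i => hinner (r i) (hsub Pz zMS) ^2)).
    { rewrite (sum1_ext m _ (fun i => (sum1 n (fun l => U i l * (sigma l * beta l)))^2))
        by (intros; rewrite Hri; auto).
      rewrite U_collapse; auto. apply sum1_ext; intros; ring. }
    rewrite Sq. eapply Rle_trans.
    { apply (sum1_le m _ (fun i => 2 * hinner (r i) (hsub zstar zMS) ^ 2 + 2 * hinner (r i) d ^ 2)).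
      intros i Hi. unfold d. rewrite !inner_subr. pose proof (pow2_ge_0 (hinner (r i) zstar - hinner (r i) zMS + (hinner (r i) zstar - hinner (r i) Pz))). nra. }
    rewrite sum1_plus, !sum1_scal. rewrite <- (Hf zMS). lra.
Qed.
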